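(* Let $G$ be a factor-critical graph. Then $G$ is equimatchable if and only if there is no independent set $I$ with $3$ vertices such that $G\setminus I$ has a perfect matching.
   Context: All graphs are finite and simple. A graph is equimatchable if all its maximal matchings have the same cardinality. A graph $G$ is factor-critical if $G-v$ has a perfect matching for every $v\in V(G)$. For $I\subseteq V(G)$, $G\setminus I$ is the subgraph induced by $V(G)\setminus I$. *)

(* Defs.v *)
From mathcomp Require Import all_boot.
Set Implicit Arguments. Unset Strict Implicit. Unset Printing Implicit Defensive.

Definition simple_graph (T : finType) (e : rel T) : Prop :=
  symmetric e /\ irreflexive e.

Definition is_edge (T : finType) (e : rel T) (f : {set T}) : bool :=
  [exists x, exists y, e x y && (f == [set x; y])].

Definition matching (T : finType) (e : rel T) (M : {set {set T}}) : bool :=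
  [forall f in M, is_edge e f] && trivIset M.

Definition matching_in (T : finType) (e : rel T) (S : {set T})
  (M : {set {set T}}) : bool :=
  matching e M && [forall f in M, f \subset S].

Definition perfect_matching_in (T : finType) (e : rel T) (S : {set T})
  (M : {set {set T}}) : bool :=
  matching_in e S M && (cover M == S).

Definition has_perfect_matching_in (T : finType) (e : rel T) (S : {set T}) : Prop :=
  exists M, perfect_matching_in e S M.

Definition maximal_matching (T : finType) (e : rel T) (M : {set {set T}}) : Prop :=
  matching e M /\ forall M', matching e M' -> M \subset M' -> M' = M.

Definition equimatchable (T : finType) (e : rel T) : Prop :=
  forall M1 M2, maximal_matching e M1 -> maximal_matching e M2 -> #|M1| = #|M2|.

Definition factor_critical (T : finType) (e : rel T) : Prop :=
  forall v : T, has_perfect_matching_in e (~: [set v]).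

Definition independent (T : finType) (e : rel T) (I : {set T}) : bool :=
  [forall x in I, forall y in I, ~~ e x y].

(* Main.v *)
Require Import Defs.
From mathcomp Require Import all_boot.
From mathcomp Require Import zify.
Set Implicit Arguments. Unset Strict Implicit. Unset Printing Implicit Defensive.

Lemma coverP (T : finType) (M : {set {set T}}) z :
  reflect (exists2 g, g \in M & z \in g) (z \in cover M).
Proof. exact: bigcupP. Qed.

Lemma matching_edge (T : finType) (e : rel T) M f :
  matching e M -> f \in M -> exists x y, e x y /\ f = [set x; y].
Proof.
case/andP=> /forallP H _ fM; move: (H f); rewrite fM /=.
by case/existsP=> x /existsP [y /andP [exy /eqP ->]]; exists x, y.
Qed.

Lemma matching_edge_at (T : finType) (e : rel T) M f w :
  symmetric e -> matching e M -> f \in M -> w \in f ->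
  exists x, e w x /\ f = [set w; x].
Proof.
move=> es mM fM; case: (matching_edge mM fM) => a [b [eab ->]].
rewrite !inE => /orP [] /eqP ->; first by exists b.
by exists a; rewrite es; split => //; apply/setP=> z; rewrite !inE orbC.
Qed.

Lemma matching_triv (T : finType) (e : rel T) M : matching e M -> trivIset M.
Proof. by case/andP. Qed.

Lemma matching_disj (T : finType) (e : rel T) M f g z :
  matching e M -> f \in M -> g \in M -> z \in f -> z \in g -> f = g.
Proof.
move=> /matching_triv /trivIsetP H fM gM zf zg; apply/eqP; apply/negPn/negP => ne.
by move: (disjointFr (H _ _ fM gM ne) zf); rewrite zg.
Qed.

Lemma card_cover_matching (T : finType) (e : rel T) M :
  irreflexive e -> matching e M -> #|cover M| = #|M| * 2.
Proof.
move=> ei mM; apply: card_uniform_partition.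
  by move=> f fM; case: (matching_edge mM fM) => x [y [exy ->]];
    rewrite cards2; case: eqP exy => // ->; rewrite ei.
rewrite /partition eqxx (matching_triv mM) /=; apply/negP => /(matching_edge mM).
case=> x [y [_ /setP /(_ x)]]; by rewrite !inE eqxx.
Qed.

Lemma matching_sub (T : finType) (e : rel T) (M M' : {set {set T}}) :
  matching e M -> M' \subset M -> matching e M'.
Proof.
move=> mM sub; apply/andP; split; last exact: trivIsetS sub (matching_triv mM).
case/andP: mM => /forallP H _; apply/forallP => f; apply/implyP => fM'.
by move: (H f); rewrite (subsetP sub f fM').
Qed.

Lemma matching_add (T : finType) (e : rel T) M x y :
  matching e M -> e x y -> x \notin cover M -> y \notin cover M ->
  matching e ([set x; y] |: M).
Proof.
move=> mM exy xM yM; apply/andP; split.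
  apply/forallP => f; apply/implyP; rewrite !inE => /orP [/eqP ->|fM].
    by apply/existsP; exists x; apply/existsP; exists y; rewrite exy eqxx.
  by case/andP: mM => /forallP /(_ f); rewrite fM.
have disj C : C \in M -> [disjoint [set x; y] & C].
  move=> CM; rewrite disjoints_subset; apply/subsetP => z; rewrite !inE.
  case/orP => /eqP ->; apply/negP => zC.
    by case/negP: xM; apply/coverP; exists C.
  by case/negP: yM; apply/coverP; exists C.
apply/trivIsetP => A B; rewrite !inE => /orP [/eqP ->|AM] /orP [/eqP ->|BM].
- by rewrite eqxx.
- by move=> _; apply: disj.
- by move=> _; rewrite disjoint_sym; apply: disj.
- by move=> ne; move/trivIsetP: (matching_triv mM); apply.
Qed.

Lemma cover_add (T : finType) (M : {set {set T}}) x y z :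
  (z \in cover ([set x; y] |: M)) = [|| z == x, z == y | z \in cover M].
Proof.
apply/coverP/idP.
  case=> g; rewrite !inE => /orP [/eqP -> | gM]; first by rewrite !inE => /orP [] ->; rewrite ?orbT.
  by move=> zg; rewrite orbA; apply/orP; right; apply/coverP; exists g.
case/orP => [/eqP ->|/orP [/eqP ->|/coverP [g gM zg]]].
- by exists [set x; y]; rewrite !inE eqxx.
- by exists [set x; y]; rewrite !inE eqxx ?orbT.
- by exists g; rewrite // !inE gM orbT.
Qed.

Lemma cover_del (T : finType) (e : rel T) M f z :
  matching e M -> f \in M ->
  (z \in cover (M :\ f)) = (z \in cover M) && (z \notin f).
Proof.
move=> mM fM; apply/coverP/andP.
  case=> g; rewrite !inE => /andP [ne gM] zg; split; first by apply/coverP; exists g.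
  apply/negP => zf; case/eqP: ne; exact: (matching_disj mM gM fM zg zf).
case=> /coverP [g gM zg] zf; exists g => //; rewrite !inE gM andbT.
by apply/eqP => gf; rewrite -gf zg in zf.
Qed.

Lemma maximal_indep (T : finType) (e : rel T) M :
  maximal_matching e M -> independent e (~: cover M).
Proof.
case=> mM mx; apply/forallP => x; apply/implyP; rewrite inE => xM.
apply/forallP => y; apply/implyP; rewrite inE => yM; apply/negP => exy.
have := mx _ (matching_add mM exy xM yM) (subsetUr _ _).
move/setP/(_ [set x; y]); rewrite !inE eqxx /= => /esym xyM.
by case/negP: xM; apply/coverP; exists [set x; y]; rewrite ?inE ?eqxx.
Qed.

Lemma indep_maximal (T : finType) (e : rel T) M :
  matching e M -> independent e (~: cover M) -> maximal_matching e M.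
Proof.
move=> mM ind; split => // M' mM' sub; apply/eqP; rewrite eqEsubset sub andbT.
apply/subsetP => f fM'; apply/negPn/negP => fM.
case: (matching_edge mM' fM') => x [y [exy fE]].
have nc z : z \in f -> z \notin cover M.
  move=> zf; apply/negP => /coverP [g gM zg].
  have := matching_disj mM' fM' (subsetP sub g gM) zf zg.
  by move=> fg; rewrite fg gM in fM.
move/forallP: ind => /(_ x) /implyP; rewrite inE nc ?fE ?inE ?eqxx //.
move=> /(_ isT) /forallP /(_ y) /implyP; rewrite inE nc ?fE ?inE ?eqxx ?orbT //.
by move=> /(_ isT); rewrite exy.
Qed.

Lemma pm_facts (T : finType) (e : rel T) S N :
  perfect_matching_in e S N -> matching e N /\ cover N = S.
Proof. by case/andP => /andP [mN _] /eqP. Qed.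

Lemma fc_odd (T : finType) (e : rel T) (u : T) :
  irreflexive e -> factor_critical e -> exists k, #|T| = k * 2 + 1.
Proof.
move=> ei fc; case: (fc u) => N /pm_facts [mN cN].
exists #|N|; rewrite -(card_cover_matching ei mN) cN.
by have := cardsC [set u]; rewrite cards1; lia.
Qed.

Lemma indep_sub (T : finType) (e : rel T) (A B : {set T}) :
  A \subset B -> independent e B -> independent e A.
Proof.
move=> sub /forallP H; apply/forallP => x; apply/implyP => xA.
move: (H x); rewrite (subsetP sub x xA) /= => /forallP H2.
apply/forallP => y; apply/implyP => yA; move: (H2 y); by rewrite (subsetP sub y yA).
Qed.

Lemma indep_use (T : finType) (e : rel T) (A : {set T}) x y :
  independent e A -> x \in A -> y \in A -> e x y = false.
Proof.
by move=> /forallP /(_ x) /implyP H xA yA; move: (H xA) => /forallP /(_ y) /implyP /(_ yA) /negbTE.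
Qed.

Lemma step_claim (T : finType) (e : rel T) u N :
  symmetric e -> irreflexive e -> perfect_matching_in e (~: [set u]) N ->
  forall M, matching e M -> independent e (~: cover M) -> 3 <= #|~: cover M| ->
  exists I : {set T}, [/\ independent e I, #|I| = 3 & has_perfect_matching_in e (~: I)].
Proof.
move=> es ei /pm_facts [mN cN].
have parity : #|T| = #|N| * 2 + 1.
  by rewrite -(card_cover_matching ei mN) cN; have := cardsC [set u]; rewrite cards1; lia.
pose K := #|[set: {set T}]|.+1.
have KP (A : {set {set T}}) : #|A| < K by rewrite ltnS; apply: subset_leq_card (subsetT A).
suff H : forall m (M : {set {set T}}), (#|T| - #|M|) * K + #|M :\: N| = m -> matching e M ->
   independent e (~: cover M) -> 3 <= #|~: cover M| ->
  exists I : {set T}, [/\ independent e I, #|I| = 3 & has_perfect_matching_in e (~: I)].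
  by move=> M; apply: H.
elim/ltn_ind => m IH M Hm mM ind U3.
have cM := card_cover_matching ei mM.
have cC := cardsC (cover M).
have [eq3|ne3] := eqVneq #|~: cover M| 3.
  exists (~: cover M); split => //; exists M.
  rewrite /perfect_matching_in /matching_in mM setCK eqxx andbT /=.
  apply/forallP => f; apply/implyP => fM; apply/subsetP => z zf; apply/coverP; by exists f.
have U5 : 5 <= #|~: cover M| by lia.
have /card_gt0P [w wU] : 0 < #|~: cover M :\ u|.
  by have := cardsD1 u (~: cover M); lia.
rewrite !inE in wU; case/andP: wU => wu wM.
have wN : w \in cover N by rewrite cN !inE.
case/coverP: wN => g gN wg.
case: (matching_edge_at es mN gN wg) => x [ewx gE].
have xM : x \in cover M.
  apply/negPn/negP => xM.
  by have := indep_use ind (x:=w) (y:=x); rewrite !inE ewx => /(_ wM xM).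
case/coverP: xM => f fM xf.
case: (matching_edge_at es mM fM xf) => y [exy fE].
have yf : y \in f by rewrite fE !inE eqxx orbT.
have yM : y \in cover M by apply/coverP; exists f.
have wx : (w == x) = false by apply/negbTE/negP => /eqP wx; rewrite wx ei in ewx.
have wy : (w == y) = false by apply/negbTE/negP => /eqP wy; rewrite wy yM in wM.
have xy : (y == x) = false by apply/negbTE/negP => /eqP yx; rewrite yx ei in exy.
have wy' : (y == w) = false by rewrite eq_sym.
have wf : w \notin f by rewrite fE !inE wx wy.
have mMf := matching_sub mM (subD1set M f).
pose M1 := [set w; x] |: (M :\ f).
have mM1 : matching e M1.
  apply: matching_add => //; rewrite (cover_del _ mM fM) negb_and negbK.
    by rewrite wM.
  by rewrite xf orbT.
have cM1 z : (z \in cover M1) = [|| z == w, z == x | (z \in cover M) && (z \notin f)].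
  by rewrite cover_add (cover_del _ mM fM).
have wxM1 : [set w; x] \notin M :\ f.
  apply/negP => H; have : w \in cover (M :\ f) by apply/coverP; exists [set w; x]; rewrite // !inE eqxx.
  by rewrite (cover_del _ mM fM) (negbTE wM).
have cardM1 : #|M1| = #|M|.
  by rewrite cardsU1 wxM1 (cardsD1 f M) fM.
have fN : f \notin N.
  apply/negP => fN; have xg : x \in g by rewrite gE !inE eqxx orbT.
  have gf := matching_disj mN gN fN xg xf.
  by rewrite -gf wg in wf.
case: (boolP [exists z, [&& z \notin cover M, z != w & e y z]]).
  case/existsP => z /and3P [zM zw eyz].
  have xcM : x \in cover M by apply/coverP; exists f.
  have zx : (z == x) = false by apply/negbTE/negP => /eqP zx; rewrite zx xcM in zM.
  have yM1 : y \notin cover M1 by rewrite cM1 wy' xy yf andbF.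
  have zM1 : z \notin cover M1 by rewrite cM1 (negbTE zw) zx (negbTE zM).
  pose M2 := [set y; z] |: M1.
  have mM2 : matching e M2 by apply: matching_add.
  have yzM1 : [set y; z] \notin M1.
    by apply/negP => H; case/negP: yM1; apply/coverP; exists [set y; z]; rewrite // !inE eqxx.
  have cardM2 : #|M2| = #|M| + 1 by rewrite cardsU1 yzM1 cardM1 addnC.
  have sub2 : ~: cover M2 \subset ~: cover M.
    apply/subsetP => v; rewrite !inE; apply: contra => vM.
    rewrite cover_add cM1; case: (boolP (v \in f)) => vf.
      by move: vf; rewrite fE !inE => /orP [] ->; rewrite ?orbT.
    by rewrite vM !orbT.
  have cM2 := card_cover_matching ei mM2.
  have cC2 := cardsC (cover M2).
  have K2 := KP (M2 :\: N).
  rewrite cardM2 in cM2.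
  have U2 : 3 <= #|~: cover M2| by clear -cM cC cM2 cC2 U5; lia.
  have := IH ((#|T| - #|M2|) * K + #|M2 :\: N|) _ M2 (erefl _) mM2 (indep_sub sub2 ind) U2.
  apply.
  rewrite -Hm cardM2.
  have [a' Ha] : exists a', #|T| - #|M| = a'.+1.
    by exists (#|T| - #|M|).-1; clear -cM cC U5; lia.
  have -> : #|T| - (#|M| + 1) = a' by rewrite subnDA Ha subn1.
  rewrite Ha mulSn (addnC K) -addnA ltn_add2l.
  exact: leq_trans K2 (leq_addr _ _).
move=> /existsPn noz.
have U1 z : z \notin cover M1 -> ((z \notin cover M) && (z != w)) || (z == y).
  rewrite cM1 !negb_or => /and3P [zw zx]; rewrite negb_and negbK.
  case/orP => [zM|zf]; first by rewrite zM zw.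
  by move: zf; rewrite fE !inE (negbTE zx) /= => ->; rewrite orbT.
have ind1 : independent e (~: cover M1).
  apply/forallP => a; apply/implyP; rewrite inE => /U1 Ha.
  apply/forallP => b; apply/implyP; rewrite inE => /U1 Hb.
  case/orP: Ha => [/andP [aM aw]|/eqP ->]; case/orP: Hb => [/andP [bM bw]|/eqP ->].
  - by rewrite (indep_use ind) ?inE.
  - by move: (noz a); rewrite aM aw /= es.
  - by move: (noz b); rewrite bM bw.
  - by rewrite ei.
have cM1' := card_cover_matching ei mM1.
have cC1 := cardsC (cover M1).
rewrite cardM1 in cM1'.
have U1c : 3 <= #|~: cover M1| by clear -cM cC cM1' cC1 U5; lia.
have pr : M1 :\: N \proper M :\: N.
  apply/properP; split.
    apply/subsetP => h; rewrite !inE => /andP [hN /orP [/eqP hE| /andP [_ hM]]].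
      by rewrite hE -gE gN in hN.
    by rewrite hN hM.
  exists f; first by rewrite !inE fN fM.
  rewrite !inE fN eqxx /= ?andbF orbF; apply/eqP => fE'.
  by rewrite fE' !inE eqxx in wf.
have := IH ((#|T| - #|M1|) * K + #|M1 :\: N|) _ M1 (erefl _) mM1 ind1 U1c.
apply; rewrite -Hm cardM1 ltn_add2l; exact: proper_card.
Qed.

Lemma claim (T : finType) (e : rel T) M :
  simple_graph e -> factor_critical e -> maximal_matching e M -> 3 <= #|~: cover M| ->
  exists I : {set T}, [/\ independent e I, #|I| = 3 & has_perfect_matching_in e (~: I)].
Proof.
move=> [es ei] fc mx U3.
have /card_gt0P [u _] : 0 < #|~: cover M| by apply: leq_trans U3.
case: (fc u) => N pN.
exact: step_claim es ei pN M mx.1 (maximal_indep mx) U3.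
Qed.

Theorem lemma3p1 (T : finType) (e : rel T) :
  simple_graph e -> factor_critical e ->
  (equimatchable e <->
   ~ (exists I : {set T},
        [/\ independent e I, #|I| = 3 & has_perfect_matching_in e (~: I)])).
Proof.
move=> sg fc; have [es ei] := sg; split.
  move=> eqm [I [indI cI [M /pm_facts [mM cM]]]].
  have /card_gt0P [v vI] : 0 < #|I| by rewrite cI.
  case: (fc v) => N /pm_facts [mN cN].
  have mxM : maximal_matching e M by apply: indep_maximal; rewrite // cM setCK.
  have mxN : maximal_matching e N.
    apply: indep_maximal; rewrite // cN setCK.
    apply/forallP => a; apply/implyP; rewrite inE => /eqP ->.
    apply/forallP => b; apply/implyP; rewrite inE => /eqP ->; by rewrite ei.
  have := eqm _ _ mxM mxN.
  have c1 := card_cover_matching ei mM; have c2 := card_cover_matching ei mN.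
  rewrite cM in c1; rewrite cN in c2.
  have d1 := cardsC I; have d2 := cardsC [set v]; rewrite cards1 in d2.
  move=> E; rewrite E in c1; clear -c1 c2 d1 d2 cI; lia.
move=> noI M1 M2 mx1 mx2.
have small (M : {set {set T}}) : maximal_matching e M -> #|~: cover M| < 3.
  move=> mx; rewrite ltnNge; apply/negP => U3; apply: noI; exact: claim sg fc mx U3.
have s1 := small _ mx1; have s2 := small _ mx2.
have c1 := card_cover_matching ei mx1.1; have c2 := card_cover_matching ei mx2.1.
have d1 := cardsC (cover M1); have d2 := cardsC (cover M2).
case: (posnP #|T|) => [T0|Tpos].
  clear -c1 c2 d1 d2 T0; lia.
have /card_gt0P [u _] : 0 < #|[set: T]| by rewrite cardsT.
case: (fc_odd u ei fc) => k Hk.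
clear -c1 c2 d1 d2 Hk s1 s2; lia.
Qed.
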